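(* Let $s$ be a Lucasian GNS on a ring $D$ and let $\mathcal F$ be a set of positive integers stable under taking divisors. Suppose that for all positive integers $a,b$ with $\ell=\operatorname{lcm}(a,b)\in\mathcal F$ one has $s(\ell)\equiv \frac{s(a)s(b)}{s(g)}\bmod s(a)s(b)$, where $g=\gcd(a,b)$. Then $s$ is $\mathcal F$-Green.
   Context: A GNS over $D$ is $s\colon\mathbf N\to D$ with $s(0)=0$, $s(n)$ a non-zero-divisor for $n>0$, and $s(n-k)\mid s(n)-s(k)$ for $n>k>0$. It is Lucasian if $s(a+b)\equiv s(a)+s(b)\bmod s(a)s(b)$. It is $\mathcal F$-Green if for all $m\in\mathcal F$ and all $a,b\mid m$, with $g=\gcd(a,b)$, $\ell=\operatorname{lcm}(a,b)$, one has $s(m)\equiv\frac m\ell\frac{s(a)s(b)}{s(g)}\bmod s(a)s(b)$ (the quotient $s(a)s(b)/s(g)$ being an element of $D$). *)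

(* Defs.v *)
From HB Require Import structures.
From mathcomp Require Import all_boot all_order all_algebra.
Set Implicit Arguments. Unset Strict Implicit. Unset Printing Implicit Defensive.
Import GRing.Theory.
Local Open Scope ring_scope.

Definition dvdr (D : comRingType) (x y : D) : Prop := exists c : D, y = x * c.

Definition congr_mod (D : comRingType) (x y z : D) : Prop := dvdr z (x - y).

Definition non_zero_divisor (D : comRingType) (x : D) : Prop :=
  forall y : D, x * y = 0 -> y = 0.

Definition GNS (D : comRingType) (s : nat -> D) : Prop :=
  [/\ s 0%N = 0,
      (forall n : nat, (0 < n)%N -> non_zero_divisor (s n)) &
      (forall n k : nat, (0 < k)%N -> (k < n)%N -> dvdr (s (n - k)%N) (s n - s k))].

Definition Lucasian (D : comRingType) (s : nat -> D) : Prop :=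
  forall a b : nat, congr_mod (s (a + b)%N) (s a + s b) (s a * s b).

(* q is the quotient s(a)s(b)/s(gcd(a,b)) (unique, as s(gcd) is a non-zero-divisor) *)
Definition is_quot (D : comRingType) (s : nat -> D) (a b : nat) (q : D) : Prop :=
  s (gcdn a b) * q = s a * s b.

Definition Green (D : comRingType) (s : nat -> D) (F : nat -> Prop) : Prop :=
  forall m : nat, F m -> forall a b : nat, (a %| m)%N -> (b %| m)%N ->
    forall q : D, is_quot s a b q ->
      congr_mod (s m) ((m %/ lcmn a b)%:R * q) (s a * s b).

(* Main.v *)
Require Import Defs.
From HB Require Import structures.
From mathcomp Require Import all_boot all_order all_algebra.
From mathcomp Require Import ring.
Import GRing.Theory.
Local Open Scope ring_scope.

Section Aux.
Variable D : comRingType.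
Implicit Types x y z u v : D.

Lemma dv_refl x : dvdr x x.
Proof. by exists 1; rewrite mulr1. Qed.
Lemma dv0 x : dvdr x 0.
Proof. by exists 0; rewrite mulr0. Qed.
Lemma dv_trans x y z : dvdr x y -> dvdr y z -> dvdr x z.
Proof. by move=> [c ->] [d ->]; exists (c * d); rewrite mulrA. Qed.
Lemma dv_add x y z : dvdr x y -> dvdr x z -> dvdr x (y + z).
Proof. by move=> [c ->] [d ->]; exists (c + d); rewrite mulrDr. Qed.
Lemma dv_opp x y : dvdr x y -> dvdr x (- y).
Proof. by move=> [c ->]; exists (- c); rewrite mulrN. Qed.
Lemma dv_mulr x y z : dvdr x y -> dvdr x (y * z).
Proof. by move=> [c ->]; exists (c * z); rewrite mulrA. Qed.
Lemma dv_mull x y z : dvdr x y -> dvdr x (z * y).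
Proof. by rewrite mulrC; apply: dv_mulr. Qed.
Lemma dv_mul2 x y u v : dvdr x y -> dvdr u v -> dvdr (x * u) (y * v).
Proof. by move=> [c ->] [d ->]; exists (c * d); ring. Qed.
End Aux.

Theorem corollary5p12 (D : comRingType) (s : nat -> D) (F : nat -> Prop) :
  GNS s -> Lucasian s ->
  (forall m : nat, F m -> (0 < m)%N) ->
  (forall m d : nat, F m -> (d %| m)%N -> F d) ->
  (forall a b : nat, (0 < a)%N -> (0 < b)%N -> F (lcmn a b) ->
     forall q : D, is_quot s a b q ->
       congr_mod (s (lcmn a b)) q (s a * s b)) ->
  Green s F.
Proof.
move=> [s0 _ _] Luc Fpos Fdiv H m Fm a b am bm q Hq.
have m0 := Fpos m Fm.
have a0 : (0 < a)%N := dvdn_gt0 m0 am.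
have b0 : (0 < b)%N := dvdn_gt0 m0 bm.
have key : forall d k : nat, dvdr (s d) (s (k * d)%N) /\
    dvdr (s d * s d) (s (k * d)%N - k%:R * s d).
  move=> d; elim=> [|k [IH1 IH2]].
    by rewrite mul0n s0 mul0r subr0; split; apply: dv0.
  have [c Hc] := Luc (k * d)%N d.
  have E : s (k.+1 * d)%N = s (k * d)%N + s d + s (k * d)%N * s d * c.
    by rewrite mulSn addnC -Hc; ring.
  split.
    rewrite E; apply: dv_add; last by apply: dv_mulr; apply: dv_mull; apply: dv_refl.
    by apply: dv_add => //; apply: dv_refl.
  have -> : s (k.+1 * d)%N - k.+1%:R * s d =
     (s (k * d)%N - k%:R * s d) + s (k * d)%N * s d * c.
    by rewrite E mulrSr; ring.
  apply: dv_add => //; apply: dv_mulr; apply: dv_mul2 => //; apply: dv_refl.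
have sdiv : forall d n : nat, (d %| n)%N -> dvdr (s d) (s n).
  by move=> d n /dvdnP [k ->]; case: (key d k).
set l := lcmn a b.
have lm : (l %| m)%N by rewrite dvdn_lcm am bm.
have Fl : F l := Fdiv m l Fm lm.
have [c Hc] := H a b a0 b0 Fl q Hq.
have [k Ek] := dvdnP lm.
have l0 : (0 < l)%N by rewrite lcmn_gt0 a0 b0.
have -> : (m %/ l)%N = k by rewrite Ek mulnK.
have [_ [e He]] := key l k.
rewrite /congr_mod Ek.
have -> : s (k * l)%N - k%:R * q =
   (s (k * l)%N - k%:R * s l) + k%:R * (s l - q) by ring.
apply: dv_add; last by apply: dv_mull; exists c.
rewrite He; apply: dv_mulr; apply: dv_mul2; apply: sdiv.
  by rewrite dvdn_lcml.
by rewrite dvdn_lcmr.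
Qed.
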